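(* Let $\bm H$ be a finite-dimensional Hilbert space, let $\rho_{\rm i}=\sum_a p_{\rm i}(a)|\psi_a\rangle\langle\psi_a|$ and $\rho_0=\sum_b p_0(b)|\phi_b\rangle\langle\phi_b|$ be density operators with orthonormal eigenbases $\{|\psi_a\rangle\}$, $\{|\phi_b\rangle\}$. Let $H(t)$, $0\le t\le\tau$, be a (continuous) family of Hermitian operators on $\bm H$, $U:=\mathrm{T}\exp(-\mathrm{i}\int_0^\tau H(t)\,dt)$ the time-ordered exponential, and $\rho_{\rm f}:=U\rho_{\rm i}U^\dagger$. Let $\Theta$ be an anti-unitary operator on $\bm H$ with $\Theta^2=I$, set $\tilde H(t):=\Theta H(t)\Theta$, $\tilde U:=\mathrm{T}\exp(-\mathrm{i}\int_0^\tau\tilde H(\tau-t)\,dt)$, $|\tilde\psi_a\rangle:=\Theta|\psi_a\rangle$, $|\tilde\phi_b\rangle:=\Theta|\phi_b\rangle$. Define the forward and backward joint probabilities $$p(a,b):=|\langle\phi_b|U|\psi_a\rangle|^2\,p_{\rm i}(a),\qquad \tilde p(b,a):=|\langle\tilde\psi_a|\tilde U|\tilde\phi_b\rangle|^2\,p_0(b).$$ Then $$\sum_{a,b}p(a,b)\ln\frac{p(a,b)}{\tilde p(b,a)}=S(\rho_{\rm f}\|\rho_0).$$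
   Context: An anti-unitary operator is an anti-linear map preserving inner products up to complex conjugation. Conventions: $0\ln(0/x)=0$ and $x\ln(x/0)=+\infty$ for $x>0$. The quantum relative entropy is $S(\rho\|\sigma):=\mathrm{tr}[\rho\ln\rho]-\mathrm{tr}[\rho\ln\sigma]$, defined as $+\infty$ if there is $|\psi\rangle$ with $\sigma|\psi\rangle=0$ and $\langle\psi|\rho|\psi\rangle\ne0$. *)

(* Defs.v *)
From HB Require Import structures.
From mathcomp Require Import all_boot all_order all_algebra.
From mathcomp Require Import complex.
From mathcomp Require Import all_classical all_reals.
From mathcomp Require Import ereal topology normedtype derive exp.
Set Implicit Arguments. Unset Strict Implicit. Unset Printing Implicit Defensive.
Import Order.TTheory GRing.Theory Num.Theory.
Import numFieldNormedType.Exports.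
Local Open Scope ring_scope.
Local Open Scope complex_scope.
Local Open Scope classical_set_scope.
Local Open Scope ring_scope.

Section QDefs.
Variable R : realType.
Local Notation C := R[i].

Definition qadj {m k} (A : 'M[C]_(m, k)) : 'M[C]_(k, m) := (map_mx (@Num.conj _) A)^T.

Definition qinner {n} (x y : 'cV[C]_n) : C := (qadj x *m y) 0 0.

Definition qabs2 (z : C) : R := complex.Re z ^+ 2 + complex.Im z ^+ 2.

Definition qorthonormal {n} (v : 'I_n -> 'cV[C]_n) :=
  forall a b, qinner (v a) (v b) = (a == b)%:R.

Definition qprob_vec {n} (p : 'I_n -> R) :=
  (forall a, 0 <= p a) /\ \sum_a p a = 1.

Definition qdens {n} (p : 'I_n -> R) (v : 'I_n -> 'cV[C]_n) : 'M[C]_n :=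
  \sum_a (p a)%:C *: (v a *m qadj (v a)).

Definition qhermitian {n} (A : 'M[C]_n) := qadj A = A.

Definition qantiunitary {n} (T : 'cV[C]_n -> 'cV[C]_n) :=
  [/\ forall x y, T (x + y) = T x + T y,
      forall (c : C) x, T (c *: x) = Num.conj c *: T x
    & forall x y, qinner (T x) (T y) = Num.conj (qinner x y)].

(* matrix of the (linear) operator x |-> T (A (T x)) *)
Definition qsandwich {n} (T : 'cV[C]_n -> 'cV[C]_n) (A : 'M[C]_n) : 'M[C]_n :=
  \matrix_(i, j) (T (A *m T (delta_mx j 0))) i 0.

Definition qmx_cont_on {n} (tau : R) (G : R -> 'M[C]_n) :=
  forall i j,
    {within `[0, tau], continuous (fun t => complex.Re (G t i j))} /\
    {within `[0, tau], continuous (fun t => complex.Im (G t i j))}.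

(* time-ordered exponential: U = V(tau) where V solves
   V'(t) = -i G(t) V(t) on (0,tau), V continuous on [0,tau], V(0) = 1 *)
Definition qis_texp {n} (G : R -> 'M[C]_n) (tau : R) (U : 'M[C]_n) :=
  exists V : R -> 'M[C]_n,
    [/\ V 0 = 1%:M, V tau = U, qmx_cont_on tau V
      & forall t, 0 < t < tau -> forall i j,
          let D := (- 'i) *: (G t *m V t) in
          is_derive t 1 (fun s => complex.Re (V s i j)) (complex.Re (D i j)) /\
          is_derive t 1 (fun s => complex.Im (V s i j)) (complex.Im (D i j))].

(* logarithm with ln 0 := 0 (used on the support only) *)
Definition qlnz (x : R) : R := if 0 < x then ln x else 0.

(* matrix logarithm by functional calculus through the spectral
   decomposition A = M^* diag(lambda) M (M unitary) of a Hermitian A,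
   acting as ln on the support and as 0 on the kernel *)
Definition qmxlog {n} (A : 'M[C]_n) : 'M[C]_n :=
  qadj (spectralmx A) *m
      diag_mx (map_mx (fun z : C => (qlnz (complex.Re z))%:C) (spectral_diag A))
      *m spectralmx A.

Definition qrelent {n} (rho sigma : 'M[C]_n) : \bar R :=
  if `[< exists psi : 'cV[C]_n, sigma *m psi = 0 /\ qinner psi (rho *m psi) != 0 >]
  then +oo%E
  else (complex.Re (\tr (rho *m qmxlog rho)) - complex.Re (\tr (rho *m qmxlog sigma)))%:E.

Definition qklterm (x y : R) : \bar R :=
  if x == 0 then 0%E else if y == 0 then +oo%E else (x * ln (x / y))%:E.

End QDefs.

(* Main.v *)
Require Import Defs.
From HB Require Import structures.
From mathcomp Require Import all_boot all_order all_algebra.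
From mathcomp Require Import complex.
From mathcomp Require Import all_classical all_reals.
From mathcomp Require Import ereal topology normedtype derive exp.
From mathcomp Require Import ring lra.
Import Order.TTheory GRing.Theory Num.Theory.
Local Open Scope ring_scope.
Local Open Scope complex_scope.

Set Implicit Arguments. Unset Strict Implicit. Unset Printing Implicit Defensive.
Import numFieldNormedType.Exports.

Section Helpers.
Local Open Scope ring_scope.
Local Open Scope complex_scope.
Local Open Scope classical_set_scope.
Local Open Scope ring_scope.

Section Cal.
Variable R : realType.
Local Notation C := R[i].

Lemma isdD (f g : R -> R) (t df dg : R) : is_derive t 1 f df -> is_derive t 1 g dg ->
  is_derive t 1 (fun s => f s + g s) (df + dg).
Proof. move=> a b; exact: is_deriveD. Qed.
Lemma isdB (f g : R -> R) (t df dg : R) : is_derive t 1 f df -> is_derive t 1 g dg ->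
  is_derive t 1 (fun s => f s - g s) (df - dg).
Proof. move=> a b; exact: is_deriveB. Qed.
Lemma isdN (f : R -> R) (t df : R) : is_derive t 1 f df ->
  is_derive t 1 (fun s => - f s) (- df).
Proof. move=> a; exact: is_deriveN. Qed.
Lemma isdM (f g : R -> R) (t df dg : R) : is_derive t 1 f df -> is_derive t 1 g dg ->
  is_derive t 1 (fun s => f s * g s) (df * g t + f t * dg).
Proof.
move=> a b; apply: (is_derive_eq (is_deriveM a b)).
by rewrite /GRing.scale /= addrC mulrC.
Qed.
Lemma isd_ext (f g : R -> R) (t df dg : R) : is_derive t 1 f df ->
  (forall s, f s = g s) -> df = dg -> is_derive t 1 g dg.
Proof. by move=> a /funext <- <-. Qed.

Definition cder (f : R -> C) (t : R) (d : C) :=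
  is_derive t (1:R) (fun s => complex.Re (f s)) (complex.Re d) /\
  is_derive t (1:R) (fun s => complex.Im (f s)) (complex.Im d).

Lemma cder_cst (c : C) t : cder (fun _ => c) t 0.
Proof. by split; apply: is_derive_cst. Qed.

Lemma cder_add f g t df dg : cder f t df -> cder g t dg ->
  cder (fun s => f s + g s) t (df + dg).
Proof.
move=> [f1 f2] [g1 g2]; split.
- apply: (isd_ext (isdD f1 g1)).
    by move=> s; case: (f s) => a b; case: (g s).
  by case: df {f1 f2} => a b; case: dg {g1 g2}.
- apply: (isd_ext (isdD f2 g2)).
    by move=> s; case: (f s) => a b; case: (g s).
  by case: df {f1 f2} => a b; case: dg {g1 g2}.
Qed.

Lemma cder_mul f g t df dg : cder f t df -> cder g t dg ->
  cder (fun s => f s * g s) t (df * g t + f t * dg).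
Proof.
move=> [f1 f2] [g1 g2]; split.
- apply: (isd_ext (isdB (isdM f1 g1) (isdM f2 g2))).
    by move=> s; case: (f s) => a b; case: (g s).
  case: df {f1 f2} => a b; case: dg {g1 g2} => c d /=.
  by case: (f t) => e h; case: (g t) => k l /=; ring.
- apply: (isd_ext (isdD (isdM f1 g2) (isdM f2 g1))).
    by move=> s; case: (f s) => a b; case: (g s).
  case: df {f1 f2} => a b; case: dg {g1 g2} => c d /=.
  by case: (f t) => e h; case: (g t) => k l /=; ring.
Qed.

Lemma cder_conj f t df : cder f t df ->
  cder (fun s => Num.conj (f s)) t (Num.conj df).
Proof.
move=> [f1 f2]; split.
- apply: (isd_ext (f1)).
    by move=> s; case: (f s).
  by case: df {f1 f2}.
- apply: (isd_ext (isdN f2)).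
    by move=> s; case: (f s).
  by case: df {f1 f2}.
Qed.

Lemma cder_ext' f g t df : cder f t df -> (forall s, f s = g s) -> cder g t df.
Proof. by move=> h /funext <-. Qed.

Lemma cder_sum (I : Type) (r : seq I) (F : I -> R -> C) dF t :
  (forall i, cder (F i) t (dF i)) ->
  cder (fun s => \sum_(i <- r) F i s) t (\sum_(i <- r) dF i).
Proof.
move=> H; elim: r => [|a r IH].
  rewrite big_nil; apply: (cder_ext' (cder_cst 0 t)) => s; by rewrite big_nil.
rewrite big_cons; apply: (cder_ext' (cder_add (H a) IH)) => s; by rewrite big_cons.
Qed.

Lemma cder_ext f g t df : cder f t df -> (forall s, f s = g s) -> cder g t df.
Proof. by move=> h /funext <-. Qed.

Lemma isd_refl (f : R -> R) (tau t d : R) : is_derive (tau - t) 1 f d ->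
  is_derive t 1 (fun s => f (tau - s)) (- d).
Proof.
move=> fd.
have hr : is_derive t 1 (fun s : R => tau - s) (-1).
  apply: (isd_ext (isdB (is_derive_cst tau t 1) (is_derive_id t 1))).
  by []. by rewrite sub0r.
have df : derivable f (tau - t) 1 by case: fd.
have dr : derivable (fun s : R => tau - s) t 1 by case: hr.
apply: DeriveDef.
  apply/derivable1_diffP; apply: differentiable_comp.
    exact/derivable1_diffP.
  exact/derivable1_diffP.
have := derive1_comp dr df; rewrite /comp !derive1E => ->.
by rewrite !derive_val mulrN1.
Qed.

Lemma cder_refl f tau t d : cder f (tau - t) d ->
  cder (fun s => f (tau - s)) t (- d).
Proof.
move=> [f1 f2]; split.
- apply: (isd_ext (isd_refl f1)).
  by []. by case: d {f1 f2}.
- apply: (isd_ext (isd_refl f2)).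
  by []. by case: d {f1 f2}.
Qed.

Lemma wc_refl (tau : R) (f : R -> R) : {within `[0,tau], continuous f} ->
  {within `[0,tau], continuous (fun s => f (tau - s))}.
Proof.
move=> /subspace_continuousP cf; apply/subspace_continuousP => x Ax.
have rA : forall s : R, `[0, tau]%classic s -> `[0, tau]%classic (tau - s).
  move=> s; rewrite /= !in_itv /= => /andP[s0 st].
  by apply/andP; split; rewrite ?subr_ge0 // gerBl.
have cr : (fun s : R => tau - s) @ x --> tau - x.
  apply: cvgB; [exact: cvg_cst | exact: cvg_id].
apply: cvg_comp; last exact: (cf _ (rA _ Ax)).
move=> P /= HP; rewrite nbhs_simpl.
move: HP; rewrite /within /= => HP.
have := cr _ HP; rewrite /= nbhs_simpl.
move=> h; near=> s => As. have : tau - s \in `[0,tau] -> P (tau - s). near: s; exact: h. by apply; have := rA _ As. Unshelve. all: by end_near. Qed.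

Lemma wcD (A : set R) (f g : R -> R) : {within A, continuous f} ->
  {within A, continuous g} -> {within A, continuous (fun s => f s + g s)}.
Proof. by move=> cf cg x; apply: cvgD; [exact: cf|exact: cg]. Qed.
Lemma wcB (A : set R) (f g : R -> R) : {within A, continuous f} ->
  {within A, continuous g} -> {within A, continuous (fun s => f s - g s)}.
Proof. by move=> cf cg x; apply: cvgB; [exact: cf|exact: cg]. Qed.
Lemma wcM (A : set R) (f g : R -> R) : {within A, continuous f} ->
  {within A, continuous g} -> {within A, continuous (fun s => f s * g s)}.
Proof. by move=> cf cg x; apply: cvgM; [exact: cf|exact: cg]. Qed.
Lemma wcN (A : set R) (f : R -> R) : {within A, continuous f} ->
  {within A, continuous (fun s => - f s)}.
Proof. by move=> cf x; apply: cvgN; exact: cf. Qed.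
Lemma wcC (A : set R) (c : R) : {within A, continuous (fun _ : R => c)}.
Proof. by move=> x; apply: cvg_cst. Qed.
Lemma wc_ext (A : set R) (f g : R -> R) : {within A, continuous f} ->
  (forall s, f s = g s) -> {within A, continuous g}.
Proof. by move=> h /funext <-. Qed.

Definition ccont (tau : R) (f : R -> C) :=
  {within `[0, tau], continuous (fun s => complex.Re (f s))} /\
  {within `[0, tau], continuous (fun s => complex.Im (f s))}.

Lemma ccont_cst tau (c : C) : ccont tau (fun _ => c).
Proof. by split; apply: wcC. Qed.
Lemma ccont_ext tau f g : ccont tau f -> (forall s, f s = g s) -> ccont tau g.
Proof. by move=> h /funext <-. Qed.
Lemma ccont_add tau f g : ccont tau f -> ccont tau g ->
  ccont tau (fun s => f s + g s).
Proof.
move=> [f1 f2] [g1 g2]; split.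
- by apply: (wc_ext (wcD f1 g1)) => s; case: (f s) => a b; case: (g s).
- by apply: (wc_ext (wcD f2 g2)) => s; case: (f s) => a b; case: (g s).
Qed.
Lemma ccont_mul tau f g : ccont tau f -> ccont tau g ->
  ccont tau (fun s => f s * g s).
Proof.
move=> [f1 f2] [g1 g2]; split.
- by apply: (wc_ext (wcB (wcM f1 g1) (wcM f2 g2))) => s; case: (f s) => a b; case: (g s).
- by apply: (wc_ext (wcD (wcM f1 g2) (wcM f2 g1))) => s; case: (f s) => a b; case: (g s).
Qed.
Lemma ccont_conj tau f : ccont tau f -> ccont tau (fun s => Num.conj (f s)).
Proof.
move=> [f1 f2]; split.
- by apply: (wc_ext f1) => s; case: (f s).
- by apply: (wc_ext (wcN f2)) => s; case: (f s).
Qed.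
Lemma ccont_refl tau f : ccont tau f -> ccont tau (fun s => f (tau - s)).
Proof. by move=> [f1 f2]; split; [exact: (wc_refl f1)|exact: (wc_refl f2)]. Qed.
Lemma ccont_sum tau (I : Type) (r : seq I) (F : I -> R -> C) :
  (forall i, ccont tau (F i)) -> ccont tau (fun s => \sum_(i <- r) F i s).
Proof.
move=> H; elim: r => [|a r IH].
  by apply: (@ccont_ext _ (fun _ => 0) _ (ccont_cst tau 0)) => s; rewrite big_nil.
by apply: (@ccont_ext _ _ _ (ccont_add (H a) IH)) => s; rewrite big_cons.
Qed.

Lemma cconst tau f : 0 <= tau -> ccont tau f ->
  (forall t, 0 < t < tau -> cder f t 0) -> f tau = f 0.
Proof.
move=> t0 [c1 c2] hd0.
have hd : forall x, x \in `]0, tau[ -> cder f x 0 by move=> x; rewrite in_itv /= => /hd0.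
have [x _ e1] := @MVT_segment R (fun s => complex.Re (f s)) (fun _ => 0) 0 tau t0
  (fun x hx => (hd x hx).1) c1.
have [y _ e2] := @MVT_segment R (fun s => complex.Im (f s)) (fun _ => 0) 0 tau t0
  (fun x hx => (hd x hx).2) c2.
move: e1 e2; rewrite !mul0r => /eqP; rewrite subr_eq0 => /eqP e1 /eqP; rewrite subr_eq0 => /eqP e2.
by move: e1 e2; case: (f tau) => a b; case: (f 0) => c d /= -> ->.
Qed.

End Cal.


Section Mcal.
Variable R : realType.
Local Notation C := R[i].

Lemma cder_eqv (f : R -> C) t d d' : cder f t d -> d = d' -> cder f t d'.
Proof. by move=> h <-. Qed.

Definition mder {m k} (F : R -> 'M[C]_(m,k)) (t : R) (D : 'M[C]_(m,k)) :=
  forall i j, cder (fun s => F s i j) t (D i j).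
Definition mcont {m k} tau (F : R -> 'M[C]_(m,k)) :=
  forall i j, ccont tau (fun s => F s i j).

Definition cj {m k} (A : 'M[C]_(m,k)) := map_mx (@Num.conj _) A.

Lemma mx0E m k (i : 'I_m) (j : 'I_k) : (0 : 'M[C]_(m,k)) i j = 0.
Proof. by rewrite mxE. Qed.

Lemma mder_cst m k (A : 'M[C]_(m,k)) t : mder (fun _ => A) t 0.
Proof. by move=> i j; rewrite mx0E; apply: cder_cst. Qed.

Lemma mder_add m k (F G : R -> 'M[C]_(m,k)) t D E :
  mder F t D -> mder G t E -> mder (fun s => F s + G s) t (D + E).
Proof.
move=> hF hG i j; rewrite mxE.
by apply: (cder_ext' (cder_add (hF i j) (hG i j))) => s; rewrite mxE.
Qed.

Lemma mder_mul m k l (F : R -> 'M[C]_(m,k)) (G : R -> 'M[C]_(k,l)) t D E :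
  mder F t D -> mder G t E -> mder (fun s => F s *m G s) t (D *m G t + F t *m E).
Proof.
move=> hF hG i j.
have h := cder_sum (index_enum 'I_k)
   (fun q => cder_mul (hF i q) (hG q j)).
apply: (cder_eqv (cder_ext' h _)).
  by move=> s; rewrite mxE.
by rewrite !mxE -big_split.
Qed.

Lemma mder_scale m k (F : R -> 'M[C]_(m,k)) t D (c : C) :
  mder F t D -> mder (fun s => c *: F s) t (c *: D).
Proof.
move=> hF i j.
apply: (cder_eqv (cder_ext' (cder_mul (cder_cst c t) (hF i j)) _)).
  by move=> s; rewrite mxE.
by rewrite mxE mul0r add0r.
Qed.

Lemma mder_adj m k (F : R -> 'M[C]_(m,k)) t D :
  mder F t D -> mder (fun s => qadj (F s)) t (qadj D).
Proof.
move=> hF i j.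
apply: (cder_eqv (cder_ext' (cder_conj (hF j i)) _)).
  by move=> s; rewrite !mxE.
by rewrite !mxE.
Qed.

Lemma mder_cj m k (F : R -> 'M[C]_(m,k)) t D :
  mder F t D -> mder (fun s => cj (F s)) t (cj D).
Proof.
move=> hF i j.
apply: (cder_eqv (cder_ext' (cder_conj (hF i j)) _)).
  by move=> s; rewrite !mxE.
by rewrite !mxE.
Qed.

Lemma mder_refl m k (F : R -> 'M[C]_(m,k)) tau t D :
  mder F (tau - t) D -> mder (fun s => F (tau - s)) t (- D).
Proof.
move=> hF i j; rewrite mxE; exact: (cder_refl (hF i j)).
Qed.

Lemma mder_ext m k (F G : R -> 'M[C]_(m,k)) t D :
  mder F t D -> (forall s, F s = G s) -> mder G t D.
Proof. by move=> h /funext <-. Qed.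

Lemma mcont_cst m k tau (A : 'M[C]_(m,k)) : mcont tau (fun _ => A).
Proof. by move=> i j; apply: ccont_cst. Qed.

Lemma mcont_add m k tau (F G : R -> 'M[C]_(m,k)) :
  mcont tau F -> mcont tau G -> mcont tau (fun s => F s + G s).
Proof.
move=> hF hG i j.
by apply: (ccont_ext (ccont_add (hF i j) (hG i j))) => s; rewrite mxE.
Qed.

Lemma mcont_mul m k l tau (F : R -> 'M[C]_(m,k)) (G : R -> 'M[C]_(k,l)) :
  mcont tau F -> mcont tau G -> mcont tau (fun s => F s *m G s).
Proof.
move=> hF hG i j.
have h := ccont_sum (index_enum 'I_k) (fun q => ccont_mul (hF i q) (hG q j)).
by apply: (ccont_ext h) => s; rewrite mxE.
Qed.

Lemma mcont_adj m k tau (F : R -> 'M[C]_(m,k)) :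
  mcont tau F -> mcont tau (fun s => qadj (F s)).
Proof.
move=> hF i j.
by apply: (ccont_ext (ccont_conj (hF j i))) => s; rewrite !mxE.
Qed.

Lemma mcont_cj m k tau (F : R -> 'M[C]_(m,k)) :
  mcont tau F -> mcont tau (fun s => cj (F s)).
Proof.
move=> hF i j.
by apply: (ccont_ext (ccont_conj (hF i j))) => s; rewrite !mxE.
Qed.

Lemma mcont_refl m k tau (F : R -> 'M[C]_(m,k)) :
  mcont tau F -> mcont tau (fun s => F (tau - s)).
Proof. by move=> hF i j; exact: (ccont_refl (hF i j)). Qed.

Lemma mconst m k tau (F : R -> 'M[C]_(m,k)) : 0 <= tau -> mcont tau F ->
  (forall t, 0 < t < tau -> mder F t 0) -> F tau = F 0.
Proof.
move=> t0 hc hd; apply/matrixP => i j.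
apply: (cconst t0 (hc i j)) => t ht.
by have := hd t ht i j; rewrite mxE.
Qed.

End Mcal.


Section Alg.
Variable R : realType.
Local Notation C := R[i].
Local Notation cnj := (@Num.conj C).

Lemma qadj_mul m k l (A : 'M[C]_(m,k)) (B : 'M[C]_(k,l)) :
  qadj (A *m B) = qadj B *m qadj A.
Proof. by rewrite /qadj map_mxM trmx_mul. Qed.

Lemma qadjK m k (A : 'M[C]_(m,k)) : qadj (qadj A) = A.
Proof. by apply/matrixP => i j; rewrite !mxE conjCK. Qed.

Lemma qadjZ m k (c : C) (A : 'M[C]_(m,k)) : qadj (c *: A) = cnj c *: qadj A.
Proof. by apply/matrixP => i j; rewrite !mxE rmorphM. Qed.

Lemma qadjD m k (A B : 'M[C]_(m,k)) : qadj (A + B) = qadj A + qadj B.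
Proof. by apply/matrixP => i j; rewrite !mxE rmorphD. Qed.

Lemma qadj1 m : qadj (1%:M : 'M[C]_m) = 1%:M.
Proof. by apply/matrixP => i j; rewrite !mxE conjC_nat eq_sym. Qed.

Lemma cj_mul m k l (A : 'M[C]_(m,k)) (B : 'M[C]_(k,l)) :
  cj (A *m B) = cj A *m cj B.
Proof. by rewrite /cj map_mxM. Qed.

Lemma cjK m k (A : 'M[C]_(m,k)) : cj (cj A) = A.
Proof. by apply/matrixP => i j; rewrite !mxE conjCK. Qed.

Lemma cjZ m k (c : C) (A : 'M[C]_(m,k)) : cj (c *: A) = cnj c *: cj A.
Proof. by apply/matrixP => i j; rewrite !mxE rmorphM. Qed.

Lemma cj1 m : cj (1%:M : 'M[C]_m) = 1%:M.
Proof. by apply/matrixP => i j; rewrite !mxE conjC_nat. Qed.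

Lemma qadj_cj m k (A : 'M[C]_(m,k)) : qadj (cj A) = A^T.
Proof. by apply/matrixP => i j; rewrite !mxE conjCK. Qed.

Lemma cj_qadj m k (A : 'M[C]_(m,k)) : cj (qadj A) = A^T.
Proof. by apply/matrixP => i j; rewrite !mxE conjCK. Qed.

Lemma cj_delta m k (i : 'I_m) (j : 'I_k) : cj (delta_mx i j : 'M[C]_(m,k)) = delta_mx i j.
Proof. by apply/matrixP => a b; rewrite !mxE; case: (_ && _); rewrite ?conjC1 ?conjC0. Qed.

Lemma mx_ext_vec m k (A B : 'M[C]_(m,k)) :
  (forall x : 'cV[C]_k, A *m x = B *m x) -> A = B.
Proof.
move=> H; apply/matrixP => i j.
have := congr1 (fun M : 'cV[C]_m => M i 0) (H (delta_mx j 0)).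
by rewrite -!colE !mxE.
Qed.

Lemma inv_sq n (A B : 'M[C]_n) : A *m B = 1%:M -> B *m A = 1%:M.
Proof. exact: mulmx1C. Qed.

Variable n : nat.
Variable Theta : 'cV[C]_n -> 'cV[C]_n.
Hypothesis Tau : qantiunitary Theta.
Hypothesis TT : forall x, Theta (Theta x) = x.

Definition Tm : 'M[C]_n := \matrix_(k, j) (Theta (delta_mx j 0)) k 0.

Lemma Theta0 : Theta 0 = 0.
Proof.
case: Tau => hD _ _.
have h := hD 0 0; rewrite addr0 in h.
by apply: (addrI (Theta 0)); rewrite -h addr0.
Qed.

Lemma Theta_sum (I : Type) (r : seq I) (F : I -> 'cV[C]_n) :
  Theta (\sum_(i <- r) F i) = \sum_(i <- r) Theta (F i).
Proof.
case: Tau => hD _ _.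
elim: r => [|a r IH]; first by rewrite !big_nil Theta0.
by rewrite !big_cons hD IH.
Qed.

Lemma theta_mx (z : 'cV[C]_n) : Theta z = Tm *m cj z.
Proof.
case: Tau => hD hZ _.
have ez : z = \sum_(j < n) z j 0 *: delta_mx j 0.
  rewrite {1}[z]matrix_sum_delta.
  by apply: eq_bigr => j _; rewrite big_ord1.
rewrite {1}ez Theta_sum.
apply/matrixP => i k; rewrite !ord1 summxE mxE.
apply: eq_bigr => j _; rewrite hZ !mxE mulrC.
by [].
Qed.

Lemma qadj_delta m k (i : 'I_m) (j : 'I_k) : qadj (delta_mx i j : 'M[C]_(m,k)) = delta_mx j i.
Proof. by rewrite /qadj -/(cj _) cj_delta trmx_delta. Qed.

Lemma delta_entry m k (M : 'M[C]_(m,k)) i j :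
  (qadj (delta_mx i 0 : 'cV[C]_m) *m M *m (delta_mx j 0 : 'cV[C]_k)) 0 0 = M i j.
Proof. by rewrite qadj_delta -(rowE i M) -(colE j (row i M)) !mxE. Qed.

Lemma Tm_unitary : qadj Tm *m Tm = 1%:M.
Proof.
case: Tau => _ _ hI.
apply/matrixP => i j.
have e : forall M : 'M[C]_n, (qadj (delta_mx i 0 : 'cV[C]_n) *m (M *m (delta_mx j 0 : 'cV[C]_n))) 0 0 = M i j.
  by move=> M; rewrite mulmxA delta_entry.
have e1 : (qadj (delta_mx i 0 : 'cV[C]_n) *m (delta_mx j 0 : 'cV[C]_n)) 0 0 = 1%:M i j.
  by rewrite -(e 1%:M) mul1mx.
have := hI (delta_mx i 0) (delta_mx j 0).
rewrite !theta_mx !cj_delta /qinner qadj_mul -mulmxA [qadj Tm *m (Tm *m _)]mulmxA e e1 => ->.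
by rewrite !mxE conjC_nat.
Qed.

Lemma Tm_inv : Tm *m cj Tm = 1%:M.
Proof.
apply: mx_ext_vec => x.
by rewrite mul1mx -mulmxA -[cj Tm *m x]cjK cj_mul cjK -!theta_mx TT.
Qed.

Lemma Tm_adj_cj : qadj Tm = cj Tm.
Proof.
have h := inv_sq Tm_unitary.
by rewrite -[qadj Tm]mulmx1 -Tm_inv mulmxA Tm_unitary mul1mx.
Qed.

Lemma sandwich_mx (A : 'M[C]_n) : qsandwich Theta A = Tm *m cj A *m cj Tm.
Proof.
apply/matrixP => i j.
rewrite [LHS]mxE theta_mx theta_mx cj_delta !cj_mul cj_delta !mulmxA.
by rewrite -colE mxE.
Qed.

End Alg.


Section Ode.
Variable R : realType.
Local Notation C := R[i].
Local Notation cnj := (@Num.conj C).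

Lemma mder_eqv m k (F : R -> 'M[C]_(m,k)) t D D' : mder F t D -> D = D' -> mder F t D'.
Proof. by move=> h <-. Qed.

Lemma texp_facts n (G : R -> 'M[C]_n) tau U : qis_texp G tau U ->
  exists V : R -> 'M[C]_n, [/\ V 0 = 1%:M, V tau = U, mcont tau V &
    forall t, 0 < t < tau -> mder V t ((- 'i) *: (G t *m V t))].
Proof.
case=> V [h0 h1 hc hd]; exists V; split => // t ht i j; exact: (hd t ht i j).
Qed.

Lemma conjNi : cnj (- 'i) = 'i.
Proof. by rewrite rmorphN /= conjCi opprK. Qed.

Lemma texp_unitary n (G : R -> 'M[C]_n) tau U : 0 <= tau ->
  (forall t, qhermitian (G t)) -> qis_texp G tau U -> qadj U *m U = 1%:M.
Proof.
move=> t0 hG /texp_facts [V [h0 h1 hc hd]].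
have K := @mconst _ _ _ tau (fun s => qadj (V s) *m V s) t0
  (mcont_mul (mcont_adj hc) hc).
rewrite h0 h1 qadj1 mul1mx in K; apply: K => t ht.
apply: (mder_eqv (mder_mul (mder_adj (hd t ht)) (hd t ht))).
rewrite qadjZ qadj_mul hG conjNi -scalemxAl -scalemxAr !mulmxA.
by rewrite scaleNr addrN.
Qed.

Lemma herm_cj n (A : 'M[C]_n) : qhermitian A -> cj A = A^T.
Proof. by move=> hA; rewrite -[in RHS]hA /qadj trmxK. Qed.

Lemma texp_reverse n (H : R -> 'M[C]_n) tau U Ut (Theta : 'cV[C]_n -> 'cV[C]_n) :
  0 <= tau -> (forall t, qhermitian (H t)) -> qis_texp H tau U ->
  qantiunitary Theta -> (forall x, Theta (Theta x) = x) ->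
  qis_texp (fun t => qsandwich Theta (H (tau - t))) tau Ut ->
  Ut = Tm Theta *m U^T *m qadj (Tm Theta).
Proof.
move=> t0 hH /texp_facts [V [h0 h1 hc hd]] Tau TT /texp_facts [W [w0 w1 wc wd]].
set T := Tm Theta.
have TU : qadj T *m T = 1%:M by exact: Tm_unitary.
have TU' : T *m qadj T = 1%:M by exact: inv_sq.
have TA : qadj T = cj T by exact: Tm_adj_cj.
have K := @mconst _ _ _ tau (fun s => qadj (T *m cj (V (tau - s))) *m W s) t0
  (mcont_mul (mcont_adj (mcont_mul (mcont_cst tau T) (mcont_cj (mcont_refl hc)))) wc).
rewrite /= subr0 subrr h0 h1 w0 w1 cj1 mulmx1 in K.
have {}K : qadj T *m Ut = qadj (T *m cj U).
  rewrite mulmx1 in K; apply: K => t ht.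
  have ht' : 0 < tau - t < tau.
    by case/andP: ht => a b; rewrite subr_gt0 b /= gtrBl a.
  have d1 := mder_refl (hd _ ht').
  have d2 := mder_mul (mder_cst T t) (mder_cj d1).
  have d3 := mder_mul (mder_adj d2) (wd t ht).
  apply: (mder_eqv d3).
  rewrite sandwich_mx // mul0mx add0r.
  set A := H (tau - t); set X := V (tau - t); set Y := W t.
  rewrite -/T scaleNr opprK cjZ conjCi !cj_mul -scalemxAr qadjZ conjNi !qadj_mul.
  rewrite !qadj_cj -(herm_cj (hH (tau - t))) -/A.
  rewrite -!scalemxAl -!scalemxAr !mulmxA.
  rewrite -(mulmxA (X^T) (qadj T) T) TU mulmx1 TA.
  by rewrite scaleNr addrN.
by rewrite -[Ut]mul1mx -TU' -mulmxA K qadj_mul qadj_cj mulmxA.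
Qed.

End Ode.


Section Ent.
Variable R : realType.
Local Notation C := R[i].
Local Notation cnj := (@Num.conj C).

Lemma rC_add (x y : R) : ((x + y)%:C : C) = x%:C + y%:C.
Proof. by apply/eqP; rewrite eq_complex /= addr0 !eqxx. Qed.
Lemma rC_mul (x y : R) : ((x * y)%:C : C) = x%:C * y%:C.
Proof. by apply/eqP; rewrite eq_complex /= !mulr0 !mul0r subr0 addr0 !eqxx. Qed.
Lemma rC0 : ((0 : R)%:C : C) = 0. Proof. by []. Qed.
Lemma rC_sum (I : Type) (r : seq I) (F : I -> R) :
  ((\sum_(i <- r) F i)%:C : C) = \sum_(i <- r) (F i)%:C.
Proof. by elim: r => [|a r IH]; rewrite ?big_nil ?big_cons // rC_add IH. Qed.
Lemma Re_sum (I : Type) (r : seq I) (F : I -> C) :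
  complex.Re (\sum_(i <- r) F i) = \sum_(i <- r) complex.Re (F i).
Proof.
elim: r => [|a r IH]; rewrite ?big_nil ?big_cons //.
by rewrite -IH; case: (F a) => x y; case: (\sum_(i <- r) F i).
Qed.
Lemma rC_inj (x y : R) : (x%:C : C) = y%:C -> x = y.
Proof. by case. Qed.
Lemma qabs2E (z : C) : (qabs2 z)%:C = cnj z * z.
Proof.
case: z => a b; apply/eqP; rewrite eq_complex /= /qabs2 /=.
by apply/andP; split; apply/eqP; ring.
Qed.
Lemma qabs2_ge0 (z : C) : 0 <= qabs2 z.
Proof. by rewrite /qabs2 addr_ge0 // sqr_ge0. Qed.
Lemma qabs2_eq0 (z : C) : (qabs2 z == 0) = (z == 0).
Proof.
apply/idP/idP => [/eqP h|/eqP ->]; last by rewrite /qabs2 /= expr0n /= addr0.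
have : cnj z * z = 0 by rewrite -qabs2E h.
by move/eqP; rewrite mulf_eq0 conjC_eq0 orbb.
Qed.

Lemma conj_rC (x : R) : cnj (x%:C) = x%:C.
Proof. by apply/eqP; rewrite eq_complex /= oppr0 !eqxx. Qed.

Variable n : nat.

Definition colmx (v : 'I_n -> 'cV[C]_n) : 'M[C]_n := \matrix_(i, a) v a i 0.

Lemma colmxE v a : colmx v *m delta_mx a 0 = v a.
Proof. by rewrite -colE; apply/matrixP => i j; rewrite !mxE ord1. Qed.

Lemma colmx_unitary v : qorthonormal v -> qadj (colmx v) *m colmx v = 1%:M.
Proof.
move=> hv; apply/matrixP => a b.
rewrite -(delta_entry (qadj (colmx v) *m colmx v) a b) -mulmxA !mulmxA.
rewrite -qadj_mul -mulmxA !colmxE -/(qinner (v a) (v b)) hv.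
by rewrite !mxE.
Qed.

Definition dg (d : 'I_n -> R) : 'M[C]_n := diag_mx (\row_a (d a)%:C).

Lemma dgE d i j : dg d i j = (d i)%:C *+ (i == j).
Proof. by rewrite !mxE. Qed.

Lemma qadj_dg d : qadj (dg d) = dg d.
Proof.
apply/matrixP => i j; rewrite !mxE eq_sym.
by case: eqP => [->|_] /=; rewrite ?mulr1n ?mulr0n ?conj_rC ?conjC0.
Qed.

Lemma dg_mul d e : dg d *m dg e = dg (fun a => d a * e a).
Proof. by rewrite mulmx_diag; congr diag_mx; apply/matrixP => i j; rewrite !mxE rC_mul. Qed.

Lemma tr_dg d : \tr (dg d) = (\sum_a d a)%:C.
Proof. by rewrite mxtrace_diag rC_sum; apply: eq_bigr => j _; rewrite mxE. Qed.

Lemma qdens_mx p v : qdens p v = colmx v *m dg p *m qadj (colmx v).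
Proof.
apply/matrixP => i j; rewrite /qdens summxE mul_mx_diag !mxE.
apply: eq_bigr => a _; rewrite !mxE big_ord1 !mxE.
by rewrite mulrA [(p a)%:C * _]mulrC.
Qed.

Lemma adjt (A : 'M[C]_n) : map_mx (@Num.conj C) A^T = qadj A.
Proof. by rewrite /qadj map_trmx. Qed.

Lemma qmxlog_spec (W : 'M[C]_n) d : qadj W *m W = 1%:M ->
  qmxlog (W *m dg d *m qadj W) = W *m dg (fun a => qlnz (d a)) *m qadj W.
Proof.
move=> WW'; have WW := inv_sq WW'.
set A := W *m dg d *m qadj W.
have hA : qadj A = A by rewrite /A !qadj_mul qadjK qadj_dg mulmxA.
have An : A \is normalmx by apply/normalmxP; rewrite adjt hA.
have hsp := orthomx_spectralP An.
set P := spectralmx A in hsp *.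
set sp := spectral_diag A in hsp *.
have PU : P \is unitarymx by exact: spectral_unitarymx.
rewrite invmx_unitary // adjt in hsp.
have PP : P *m qadj P = 1%:M by rewrite -adjt; apply/unitarymxP.
have PP' : qadj P *m P = 1%:M by exact: inv_sq.
set Q := P *m W.
have DQ : diag_mx sp *m Q = Q *m dg d.
  transitivity (P *m A *m W).
    by rewrite [in RHS]hsp !mulmxA PP mul1mx.
  by rewrite /A /Q !mulmxA -(mulmxA _ (qadj W) W) WW' mulmx1.
have E : forall i j, sp 0 i * Q i j = Q i j * (d j)%:C.
  move=> i j; have := congr1 (fun M : 'M[C]_n => M i j) DQ.
  by rewrite mul_diag_mx mul_mx_diag !mxE.
rewrite /qmxlog -/A -/P -/sp.
set L := diag_mx _.
have DL0 : forall Q0 : 'M[C]_n, (forall i j, sp 0 i * Q0 i j = Q0 i j * (d j)%:C) ->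
    L *m Q0 = Q0 *m dg (fun a => qlnz (d a)).
  move=> Q0 E0.
  apply/matrixP => i j; rewrite mul_diag_mx mul_mx_diag !mxE.
  have [->|nz] := eqVneq (Q0 i j) 0; first by rewrite mulr0 mul0r.
  have -> : sp 0 i = (d j)%:C by apply: (mulIf nz); rewrite E0 mulrC.
  by rewrite mulrC.
have DL := DL0 Q E.
transitivity (qadj P *m (L *m Q) *m qadj W).
  by rewrite /Q !mulmxA -(mulmxA _ W (qadj W)) WW mulmx1.
by rewrite DL /Q !mulmxA PP' mul1mx.
Qed.

Lemma conj_mulmx (W X Y : 'M[C]_n) : qadj W *m W = 1%:M ->
  (W *m X *m qadj W) *m (W *m Y *m qadj W) = W *m (X *m Y) *m qadj W.
Proof.
move=> WW.
by rewrite !mulmxA -(mulmxA _ (qadj W) W) WW mulmx1.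
Qed.

Lemma tr_conj (W Z : 'M[C]_n) : qadj W *m W = 1%:M -> \tr (W *m Z *m qadj W) = \tr Z.
Proof. by move=> WW; rewrite mxtrace_mulC mulmxA WW mul1mx. Qed.

Lemma tr_dg_mul d (X : 'M[C]_n) : \tr (dg d *m X) = \sum_a (d a)%:C * X a a.
Proof. rewrite mul_diag_mx /mxtrace; apply: eq_bigr => a _. by rewrite mxE; congr (_ * _); rewrite mxE. Qed.

Lemma sand_diag (M : 'M[C]_n) l a :
  (qadj M *m dg l *m M) a a = \sum_b ((qabs2 (M b a)) * l b)%:C.
Proof.
rewrite mul_mx_diag mxE; apply: eq_bigr => b _.
by rewrite !mxE rC_mul qabs2E mulrAC.
Qed.

Lemma sand_diag' (M : 'M[C]_n) l b :
  (M *m dg l *m qadj M) b b = \sum_a (l a * (qabs2 (M b a)))%:C.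
Proof.
rewrite mxE; apply: eq_bigr => a _.
by rewrite mul_mx_diag !mxE rC_mul qabs2E [_ * M b a]mulrC mulrCA mulrA.
Qed.

Lemma dg_delta d b : dg d *m (delta_mx b 0 : 'cV[C]_n) = (d b)%:C *: delta_mx b 0.
Proof.
apply/matrixP => i j; rewrite mul_diag_mx !mxE.
by case: eqP => [->|_] /=; rewrite ?mulr1 ?mulr0.
Qed.

Lemma sum_neq0 (F : 'I_n -> C) : \sum_i F i != 0 -> exists i, F i != 0.
Proof.
move=> h; case: (pickP (fun i => F i != 0)) => [i hi|hn]; first by exists i.
by move: h; rewrite big1 ?eqxx // => i _; have := hn i => /negbFE/eqP.
Qed.

End Ent.


Section Main.
Variable R : realType.
Local Notation C := R[i].

Lemma rC_neq0 (x : R) : x != 0 -> (x%:C : C) != 0.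
Proof. by apply: contra => /eqP h; apply/eqP; apply: rC_inj. Qed.

Lemma main_facts (n : nat)
  (pi p0 : 'I_n -> R) (psi phi : 'I_n -> 'cV[R[i]]_n)
  (H : R -> 'M[R[i]]_n) (tau : R) (U Ut : 'M[R[i]]_n)
  (Theta : 'cV[R[i]]_n -> 'cV[R[i]]_n) :
  qorthonormal psi -> qorthonormal phi ->
  0 <= tau ->
  (forall t, qhermitian (H t)) ->
  qis_texp H tau U ->
  qantiunitary Theta -> (forall x, Theta (Theta x) = x) ->
  qis_texp (fun t => qsandwich Theta (H (tau - t))) tau Ut ->
  let W := U *m colmx psi in
  let M := qadj (colmx phi) *m W in
  [/\ qadj W *m W = 1%:M, qadj M *m M = 1%:M,
      forall a b, qinner (phi b) (U *m psi a) = M b a &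
      forall a b, qinner (Theta (psi a)) (Ut *m Theta (phi b)) = M b a].
Proof.
move=> hpsi hphi t0 hH hU Tau TT hUt W M.
have UU := texp_unitary t0 hH hU.
have Ute := texp_reverse t0 hH hU Tau TT hUt.
have PsU := colmx_unitary hpsi.
have PhU := colmx_unitary hphi.
have PhU' := inv_sq PhU.
have WU : qadj W *m W = 1%:M.
  by rewrite /W qadj_mul mulmxA -(mulmxA _ (qadj U)) UU mulmx1.
have amp : forall a b, qinner (phi b) (U *m psi a) = M b a.
  move=> a b; rewrite /qinner -(colmxE psi a) -(colmxE phi b).
  rewrite qadj_mul !mulmxA -(delta_entry M b a) /M /W !mulmxA.
  by [].
split => //.
  rewrite /M qadj_mul qadjK !mulmxA -(mulmxA _ (colmx phi)) PhU' mulmx1 -mulmxA; exact: WU.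
move=> a b; rewrite -amp Ute !(theta_mx Tau).
set T := Tm Theta.
have TU : qadj T *m T = 1%:M by exact: Tm_unitary.
rewrite /qinner qadj_mul !mulmxA -(mulmxA _ (qadj T) T) TU mulmx1.
rewrite -(mulmxA _ (qadj T) T) TU mulmx1 qadj_cj.
transitivity (((psi a)^T *m U^T *m cj (phi b))^T 0 0); first by rewrite [RHS]mxE.
by rewrite !trmx_mul !trmxK mulmxA.
Qed.

End Main.


End Helpers.

Unset Implicit Arguments. Set Strict Implicit.

Theorem theorem5p3 (R : realType) (n : nat)
  (pi p0 : 'I_n -> R) (psi phi : 'I_n -> 'cV[R[i]]_n)
  (H : R -> 'M[R[i]]_n) (tau : R) (U Ut : 'M[R[i]]_n)
  (Theta : 'cV[R[i]]_n -> 'cV[R[i]]_n) :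
  qprob_vec pi -> qorthonormal psi ->
  qprob_vec p0 -> qorthonormal phi ->
  0 <= tau ->
  (forall t, qhermitian (H t)) -> qmx_cont_on tau H ->
  qis_texp H tau U ->
  qantiunitary Theta -> (forall x, Theta (Theta x) = x) ->
  qis_texp (fun t => qsandwich Theta (H (tau - t))) tau Ut ->
  let rho_i := qdens pi psi in
  let rho_0 := qdens p0 phi in
  let rho_f := U *m rho_i *m qadj U in
  let p := fun a b => qabs2 (qinner (phi b) (U *m psi a)) * pi a in
  let pt := fun b a =>
    qabs2 (qinner (Theta (psi a)) (Ut *m Theta (phi b))) * p0 b in
  (\sum_(a < n) \sum_(b < n) qklterm (p a b) (pt b a))%E = qrelent rho_f rho_0.
Proof.
move=> hpi hpsi hp0 hphi t0 hH hHc hU Tau TT hUt rho_i rho_0 rho_f p pt.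
have [WU MU amp ampt] := @main_facts R n pi p0 psi phi H tau U Ut Theta hpsi hphi t0 hH hU Tau TT hUt.
set Ph := colmx phi in MU amp ampt *.
set W := U *m colmx psi in WU MU amp ampt *.
set M := qadj Ph *m W in MU amp ampt *.
have hW : W = U *m colmx psi by [].
have hM : M = qadj Ph *m W by [].
clearbody M W.
have PhU : qadj Ph *m Ph = 1%:M by exact: colmx_unitary.
have PhU' := inv_sq PhU.
have rf : rho_f = W *m dg pi *m qadj W.
  by rewrite /rho_f /rho_i qdens_mx hW qadj_mul !mulmxA.
have r0 : rho_0 = Ph *m dg p0 *m qadj Ph by rewrite /rho_0 qdens_mx.
have pE : forall a b, p a b = qabs2 (M b a) * pi a by move=> a b; rewrite /p amp.
have ptE : forall a b, pt b a = qabs2 (M b a) * p0 b by move=> a b; rewrite /pt ampt.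
have csum : forall a, \sum_b qabs2 (M b a) = 1.
  move=> a; apply: rC_inj; rewrite rC_sum.
  transitivity ((qadj M *m M) a a); last by rewrite MU mxE eqxx /= mulr1n.
  by rewrite mxE; apply: eq_bigr => b _; rewrite qabs2E !mxE.
have trff : complex.Re (\tr (rho_f *m qmxlog rho_f)) = \sum_a pi a * qlnz (pi a).
  by rewrite rf (qmxlog_spec _ WU) (conj_mulmx _ _ WU) (tr_conj _ WU) dg_mul tr_dg.
have trf0 : complex.Re (\tr (rho_f *m qmxlog rho_0)) =
    \sum_a pi a * \sum_b qabs2 (M b a) * qlnz (p0 b).
  rewrite rf r0 (qmxlog_spec _ PhU).
  transitivity (complex.Re (\tr (dg pi *m (qadj M *m dg (fun b => qlnz (p0 b)) *m M)))).
    by rewrite -!mulmxA mxtrace_mulC hM qadj_mul qadjK !mulmxA.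
  rewrite tr_dg_mul Re_sum; apply: eq_bigr => a _.
  by rewrite sand_diag -rC_sum -rC_mul.
have nNy : forall a b, qklterm (p a b) (pt b a) != -oo%E.
  by move=> a b; rewrite /qklterm; case: ifP => _ //; case: ifP.
rewrite /qrelent; case: ifPn => [/asboolP [y [h1 h2]] | /asboolP hnex].
-
  set cv := qadj Ph *m y.
  have hc : forall b, (p0 b)%:C * cv b 0 = 0.
    have : dg p0 *m cv = 0.
      have := congr1 (mulmx (qadj Ph)) h1.
      by rewrite r0 mulmx0 -!mulmxA (mulmxA (qadj Ph) Ph) PhU mul1mx.
    move=> h b; have := congr1 (fun X : 'cV[R[i]]_n => X b 0) h.
    by rewrite mul_diag_mx !mxE.
  set ev := qadj M *m cv.
  have wy : qadj W *m y = ev.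
    by rewrite /ev /cv hM qadj_mul qadjK -mulmxA (mulmxA Ph) PhU' mul1mx.
  have e : qinner y (rho_f *m y) = \sum_a Num.conj (ev a 0) * (pi a)%:C * ev a 0.
    rewrite /qinner rf.
    have -> : qadj y *m (W *m dg pi *m qadj W *m y) = qadj ev *m dg pi *m ev.
      by rewrite -wy qadj_mul qadjK !mulmxA.
    rewrite mxE; apply: eq_bigr => a _.
    by rewrite mul_mx_diag !mxE.
  rewrite e in h2; have [a ha] := sum_neq0 h2.
  move: ha; rewrite !mulf_eq0 !negb_or => /andP[/andP[_ hpa] hea].
  have hpa' : pi a != 0 by apply: contra hpa => /eqP ->.
  move: hea; rewrite /ev mxE => /sum_neq0 [b hb].
  move: hb; rewrite mulf_eq0 negb_or => /andP[hMb hcb].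
  have hMb' : M b a != 0 by move: hMb; rewrite !mxE conjC_eq0.
  have hp0b : p0 b = 0.
    have := hc b => /eqP; rewrite mulf_eq0 (negbTE hcb) orbF => /eqP.
    by move/rC_inj.
  apply/esum_eqyP.
    move=> a' _; apply/negP => /eqP /esum_eqNyP [b' [_ _ /eqP]].
    by rewrite (negbTE (nNy a' b')).
  exists a; split => //; rewrite ?mem_index_enum.
  apply/esum_eqyP; first by move=> b' _; exact: nNy.
  exists b; split => //; rewrite ?mem_index_enum.
  rewrite /qklterm pE ptE hp0b mulr0 eqxx ifF //.
  by apply/negbTE; rewrite mulf_neq0 // qabs2_eq0.
-
  have nbad : forall a b, pi a != 0 -> M b a != 0 -> p0 b != 0.
    move=> a b hpa hMb; apply/negP => /eqP hp0b; apply: hnex.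
    exists (phi b); split.
      rewrite r0 -(colmxE phi b) -!mulmxA (mulmxA (qadj Ph)) PhU mul1mx.
      by rewrite dg_delta hp0b rC0 scale0r mulmx0.
    rewrite /qinner rf -(colmxE phi b).
    have -> : qadj (Ph *m (delta_mx b 0 : 'cV[R[i]]_n)) *m (W *m dg pi *m qadj W *m (Ph *m (delta_mx b 0 : 'cV[R[i]]_n)))
        = qadj (delta_mx b 0 : 'cV[R[i]]_n) *m (M *m dg pi *m qadj M) *m (delta_mx b 0 : 'cV[R[i]]_n).
      by rewrite hM !qadj_mul qadjK !mulmxA.
    rewrite delta_entry sand_diag' -rC_sum; apply: rC_neq0.
    apply: lt0r_neq0; rewrite (bigD1 a) //=; apply: ltr_pwDl.
      apply: mulr_gt0; rewrite lt0r ?qabs2_eq0 ?hpa ?hMb ?(hpi.1 a) ?qabs2_ge0 //.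
    by apply: sumr_ge0 => i _; apply: mulr_ge0; [exact: (hpi.1 i)|exact: qabs2_ge0].
  rewrite trff trf0.
  transitivity (\sum_(a < n) (\sum_(b < n) (qabs2 (M b a) * pi a * (qlnz (pi a) - qlnz (p0 b))))%:E)%E.
    apply: eq_bigr => a _; rewrite -sumEFin; apply: eq_bigr => b _.
    rewrite /qklterm pE ptE.
    have [->|nz] := eqVneq (qabs2 (M b a) * pi a) 0; first by rewrite ?eqxx mul0r.
    move: (nz); rewrite mulf_eq0 negb_or => /andP[hc hpa].
    have hMb : M b a != 0 by rewrite -qabs2_eq0.
    have hp0b := nbad a b hpa hMb.
    rewrite (negbTE (mulf_neq0 hc hp0b)).
    have pa : 0 < pi a by rewrite lt0r hpa (hpi.1 a).
    have pb : 0 < p0 b by rewrite lt0r hp0b (hp0.1 b).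
    congr EFin; rewrite -mulf_div divff // mul1r ln_div ?posrE //.
    by rewrite /qlnz pa pb.
  rewrite sumEFin; congr EFin.
  rewrite -sumrB; apply: eq_bigr => a _.
  rewrite mulr_sumr -[pi a * qlnz (pi a)]mul1r -(csum a) mulr_suml -sumrB.
  by apply: eq_bigr => b _; ring.
Qed.
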